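(* Consider the flat DAgger algorithm with a halving learner described in the context, learning over the full policy class $\Pi_{\mathrm{FULL}}=\{(\mu,\{\pi_g\}_{g\in\mathcal{G}}):\ \mu\in\mathcal{M},\ \pi_g\in\Pi_{\mathrm{LO}}\}$, where $\mathcal{M}$ and $\Pi_{\mathrm{LO}}$ are finite, and suppose the expert policy is realizable, i.e. $(\mu^\star,\{\pi^\star_g\}_{g\in\mathcal{G}})\in\Pi_{\mathrm{FULL}}$. Then the total cost incurred by the expert in flat DAgger by round $T$ is at most $$T\,C^{I}_{\mathrm{FULL}} + \bigl(\log_2|\mathcal{M}| + |\mathcal{G}|\log_2|\Pi_{\mathrm{LO}}|\bigr)\,C^{L}_{\mathrm{FULL}}.$$
   Context: Setting. There is a state space $\mathcal{S}$, an action space $\mathcal{A}$ and a finite set of subgoals $\mathcal{G}$. A hierarchical policy consists of a meta-controller $\mu:\mathcal{S}\to\mathcal{G}$ and, for each $g\in\mathcal{G}$, a subpolicy $\pi_g$ mapping a state to an action together with a termination signal $\omega\in\{0,1\}$. An episode starts at a start state $s$; repeatedly $g=\mu(s)$ is chosen and $\pi_g$ is rolled out from $s$ until it signals termination, after which $s$ is the last state reached; the concatenation of these low-level trajectories is the full trajectory $\tau_{\mathrm{FULL}}$. The expert has a hierarchical policy $(\mu^\star,\{\pi^\star_g\}_{g\in\mathcal{G}})$. $\mathcal{M}$ is a finite class of meta-controllers and $\Pi_{\mathrm{LO}}$ a finite class of subpolicies; the flat learner treats elements of $\Pi_{\mathrm{FULL}}$ as monolithic policies and is otherwise oblivious to the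 hierarchical structure. Expert operations and costs (per invocation): $\mathrm{Inspect}_{\mathrm{FULL}}(\tau_{\mathrm{FULL}})$ returns Pass/Fail according to whether the overall task was accomplished, cost $C^{I}_{\mathrm{FULL}}$; $\mathrm{Label}_{\mathrm{FULL}}(\tau_{\mathrm{FULL}})$ returns the expert's labels (the expert's high-level and low-level decisions) on every state of the full trajectory, cost $C^{L}_{\mathrm{FULL}}$. The expert is consistent: an episode on which the executed policy agrees with the expert policy at every visited state passes $\mathrm{Inspect}_{\mathrm{FULL}}$. Learner. The halving algorithm over $\Pi_{\mathrm{FULL}}$ maintains a version space (initially $\Pi_{\mathrm{FULL}}$), acts by majority vote of the version space, and upon receiving labeled data removes all policies inconsistent with the labels. Flat DAgger (modified version). In each round $t=1,\dots,T$: obtain a new environment instance, execute the current policy to obtain $\tau_{\mathrm{FULL}}$, and call $\mathrm{Inspect}_{\mathrm{FULL}}(\tau_{\mathrm{FULL}})$; only if it returns Fail, call $\mathrm{Label}_{\mathrm{FULL}}(\tau_{\mathrm{FULL}})$ and add the labels to the data; then update the halving learner. The total expert cost is the sum of costs of all operations invoked. *)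

(* Defs.v *)
From mathcomp Require Import all_boot.
From Stdlib Require Import Reals.

Set Implicit Arguments.
Unset Strict Implicit.
Unset Printing Implicit Defensive.

(* One step record of the full trajectory: (state, current subgoal, (action, termination)). *)
Definition step_rec (S A G : Type) := (S * G * (A * bool))%type.

(* An environment instance: start state, (possibly time-dependent) transition
   function, episode length (number of primitive steps), and the expert's
   Inspect_FULL test (Pass = true) on full trajectories. *)
Record env (S A G : Type) := Env {
  env_start : S;
  env_step : nat -> S -> A -> S;
  env_horizon : nat;
  env_inspect : seq (step_rec S A G) -> bool }.

Fixpoint rollout_from (S A G : Type) (step : nat -> S -> A -> S) (mu : S -> G)
    (pi : G -> S -> A * bool) (fuel t : nat) (s : S) (cur : option G)
    : seq (step_rec S A G) :=
  match fuel with
  | 0 => [::]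
  | n.+1 =>
      let g := if cur is Some g' then g' else mu s in
      let d := pi g s in
      (s, g, d) :: rollout_from step mu pi n t.+1 (step t s d.1)
                     (if d.2 then None else Some g)
  end.

Definition rollout (S A G : Type) (e : env S A G) (mu : S -> G)
    (pi : G -> S -> A * bool) : seq (step_rec S A G) :=
  rollout_from (env_step e) mu pi (env_horizon e) 0 (env_start e) None.

Definition agrees (S : Type) (A : eqType) (G : finType) (mu mu' : S -> G)
    (pi pi' : G -> S -> A * bool) (tau : seq (step_rec S A G)) : bool :=
  all (fun r : step_rec S A G =>
         (mu r.1.1 == mu' r.1.1) && (pi r.1.2 r.1.1 == pi' r.1.2 r.1.1)) tau.

(* Indices of the full class Pi_FULL = M x (Pi_LO)^G. *)
Definition hpol (G MC LO : finType) := (MC * {ffun G -> LO})%type.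

Section Halving.
Variables (S : Type) (A : eqType) (G MC LO : finType).
Variables (mc : MC -> S -> G) (lo : LO -> S -> A * bool).

Definition hmu (h : hpol G MC LO) : S -> G := mc h.1.
Definition hpi (h : hpol G MC LO) : G -> S -> A * bool := fun g => lo (h.2 g).

(* Majority (plurality) vote of the version space V; h0 is only a default for
   the arg max (tie-breaking is by enumeration order). *)
Definition hi_vote (h0 : hpol G MC LO) (V : {set hpol G MC LO}) (s : S) : G :=
  hmu [arg max_(h > h0 in V) #|[set h' in V | hmu h' s == hmu h s]| ] s.

Definition lo_vote (h0 : hpol G MC LO) (V : {set hpol G MC LO}) (g : G) (s : S)
    : A * bool :=
  hpi [arg max_(h > h0 in V) #|[set h' in V | hpi h' g s == hpi h g s]| ] g s.

Variables (envs : nat -> env S A G) (hstar h0 : hpol G MC LO).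

(* Version space before round t+1 (rounds indexed from 0). *)
Fixpoint version_space (t : nat) : {set hpol G MC LO} :=
  match t with
  | 0 => setT
  | t'.+1 =>
      let V := version_space t' in
      let tau := rollout (envs t') (hi_vote h0 V) (lo_vote h0 V) in
      if env_inspect (envs t') tau then V
      else [set h in V | agrees (hmu h) (hmu hstar) (hpi h) (hpi hstar) tau]
  end.

Definition round_traj (t : nat) : seq (step_rec S A G) :=
  rollout (envs t) (hi_vote h0 (version_space t)) (lo_vote h0 (version_space t)).

Definition round_pass (t : nat) : bool := env_inspect (envs t) (round_traj t).

Fixpoint dagger_cost (CI CL : R) (T : nat) : R :=
  match T with
  | 0 => 0%R
  | t.+1 => (dagger_cost CI CL t + CI + (if round_pass t then 0 else CL))%R
  end.

End Halving.

Definition log2 (x : R) : R := (ln x / ln 2)%R.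

(* Main.v *)
Require Import Defs.
From mathcomp Require Import all_boot.

Lemma argmax_any (I : finType) (i0 i1 : I) (P : pred I) (F : I -> nat) :
  P i1 -> extremum_spec geq P F (arg_max i0 P F).
Proof.
move=> P1; rewrite /arg_max /extremum; case: pickP => [i /andP[Pi /'forall_implyP/= min_i] | no_i].
  by split=> // j; apply/implyP.
have := arg_maxnP F P1; rewrite /arg_max /extremum.
case: pickP => [i Hi|_]; first by rewrite no_i in Hi.
case=> i Pi Hmax; exfalso.
have := no_i i; rewrite /= Pi /=.
move/negbT; rewrite negb_forall => /existsP[j]; rewrite negb_imply => /andP[Pj].
by move/negP; apply; apply: Hmax.
Qed.

Lemma halving {I : finType} {K : eqType} (k : I -> K) (i0 : I) (V : {set I}) (x : K) :
  x != k [arg max_(h > i0 in V) #|[set h' in V | k h' == k h]| ] ->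
  (#|[set h' in V | k h' == x]| * 2 <= #|V|)%N.
Proof.
set hv := arg_max _ _ _.
move=> Hx.
case: (set_0Vmem [set h' in V | k h' == x]) => [-> | [h1]]; first by rewrite cards0.
rewrite inE => /andP[h1V /eqP kh1].
move: Hx; rewrite /hv.
case: (@argmax_any _ i0 h1 (fun h => h \in V) (fun h => #|[set h' in V | k h' == k h]|) h1V) => i iV Hmax Hx.
have Hle := Hmax h1 h1V. rewrite kh1 in Hle.
have Hdisj : [disjoint [set h' in V | k h' == x] & [set h' in V | k h' == k i]].
  rewrite disjoint_subset; apply/subsetP => h; rewrite !inE => /andP[_ /eqP ->].
  by rewrite negb_and Hx orbT.
have Hu : #|[set h' in V | k h' == x] :|: [set h' in V | k h' == k i]| = #|[set h' in V | k h' == x]| + #|[set h' in V | k h' == k i]|.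
  by apply/eqP; rewrite (leq_card_setU _ _).2 Hdisj.
have Hsub : [set h' in V | k h' == x] :|: [set h' in V | k h' == k i] \subset V.
  by apply/subsetP => h; rewrite !inE => /orP[] /andP[].
have := subset_leq_card Hsub; rewrite Hu.
move: Hle; set a := #|_|; set b := #|_|; move=> Hle Hab.
rewrite muln2 -addnn; apply: leq_trans Hab; exact: leq_add.
Qed.

Lemma find_bad (T : Type) (q : pred T) (s : seq T) :
  ~~ all q s -> exists r, ~~ q r /\ forall p : pred T, all p s -> p r.
Proof.
elim: s => [|x s IH] //=; rewrite negb_and => /orP[Hx|Hs].
  by exists x; split => // p /andP[].
have [r [Hr Hp]] := IH Hs; exists r; split => // p /andP[_]; exact: Hp.
Qed.

Lemma fail_step {S : Type} {A : eqType} {G MC LO : finType}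
  (mc : MC -> S -> G) (lo : LO -> S -> A * bool)
  (envs : nat -> env S A G) (hstar h0 : hpol G MC LO) t :
  (forall (t : nat) (mu : S -> G) (pi : G -> S -> A * bool),
      agrees mu (hmu mc hstar) pi (hpi lo hstar) (rollout (envs t) mu pi) ->
      env_inspect (envs t) (rollout (envs t) mu pi)) ->
  ~~ round_pass mc lo envs hstar h0 t ->
  (#|version_space mc lo envs hstar h0 t.+1| * 2 <= #|version_space mc lo envs hstar h0 t|)%N.
Proof.
move=> Hcons; rewrite /round_pass /round_traj => Hf /=; rewrite (negbTE Hf).
set V := version_space mc lo envs hstar h0 t.
set tau := rollout _ _ _.
have Hna : ~~ agrees (hi_vote mc h0 V) (hmu mc hstar) (lo_vote lo h0 V) (hpi lo hstar) tau.
  by apply: contra Hf; apply: Hcons.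
have [r [Hr Hall]] := @find_bad _ _ tau Hna; move: Hr; rewrite negb_and => /orP[] Hr.
- apply: leq_trans _ (halving (fun h => hmu mc h r.1.1) h0 V (hmu mc hstar r.1.1) _).
    rewrite leq_mul2r /=; apply: subset_leq_card; apply/subsetP => h.
    rewrite !inE => /andP[hV /Hall /andP[H1 _]]; by rewrite hV H1.
  by rewrite eq_sym.
- apply: leq_trans _ (halving (fun h => hpi lo h r.1.2 r.1.1) h0 V (hpi lo hstar r.1.2 r.1.1) _).
    rewrite leq_mul2r /=; apply: subset_leq_card; apply/subsetP => h.
    rewrite !inE => /andP[hV /Hall /andP[_ H1]]; by rewrite hV H1.
  by rewrite eq_sym.
Qed.

Lemma any_step {S : Type} {A : eqType} {G MC LO : finType}
  (mc : MC -> S -> G) (lo : LO -> S -> A * bool)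
  (envs : nat -> env S A G) (hstar h0 : hpol G MC LO) t :
  (#|version_space mc lo envs hstar h0 t.+1| <= #|version_space mc lo envs hstar h0 t|)%N.
Proof.
rewrite /=; case: ifP => _ //; apply: subset_leq_card; apply/subsetP => h; rewrite inE.
by case/andP.
Qed.

Lemma star_in {S : Type} {A : eqType} {G MC LO : finType}
  (mc : MC -> S -> G) (lo : LO -> S -> A * bool)
  (envs : nat -> env S A G) (hstar h0 : hpol G MC LO) t :
  hstar \in version_space mc lo envs hstar h0 t.
Proof.
elim: t => [|t IH] /=; first by rewrite inE.
case: ifP => _ //; rewrite inE IH /= /agrees; elim: (rollout _ _ _) => //= r s ->; by rewrite !eqxx.
Qed.

Fixpoint nfail {S : Type} {A : eqType} {G MC LO : finType}
  (mc : MC -> S -> G) (lo : LO -> S -> A * bool)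
  (envs : nat -> env S A G) (hstar h0 : hpol G MC LO) T : nat :=
  match T with
  | 0 => 0
  | t.+1 => @nfail S A G MC LO mc lo envs hstar h0 t + ~~ round_pass mc lo envs hstar h0 t
  end.

Lemma nfail_bound {S : Type} {A : eqType} {G MC LO : finType}
  (mc : MC -> S -> G) (lo : LO -> S -> A * bool)
  (envs : nat -> env S A G) (hstar h0 : hpol G MC LO) T :
  (forall (t : nat) (mu : S -> G) (pi : G -> S -> A * bool),
      agrees mu (hmu mc hstar) pi (hpi lo hstar) (rollout (envs t) mu pi) ->
      env_inspect (envs t) (rollout (envs t) mu pi)) ->
  (2 ^ nfail mc lo envs hstar h0 T * #|version_space mc lo envs hstar h0 T| <= #|MC| * #|LO| ^ #|G|)%N.
Proof.
move=> Hcons; elim: T => [|t IH].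
  by rewrite /= expn0 mul1n cardsT card_prod card_ffun.
apply: leq_trans IH.
change (nfail mc lo envs hstar h0 t.+1) with (nfail mc lo envs hstar h0 t + ~~ round_pass mc lo envs hstar h0 t)%N.
case Hp: (round_pass mc lo envs hstar h0 t).
  by rewrite addn0 leq_mul2l (any_step mc lo envs hstar h0 t) orbT.
rewrite addn1 expnS [2 * _]mulnC -mulnA leq_mul2l; apply/orP; right.
by rewrite mulnC; apply: fail_step => //; rewrite Hp.
Qed.

From Stdlib Require Import Reals Lra.
Open Scope R_scope.

Lemma INR_expn2 (n : nat) : INR (expn 2 n) = 2 ^ n.
Proof.
elim: n => [|n IH]; first by rewrite expn0.
by rewrite expnS mult_INR IH /=.
Qed.

Lemma INR_expn (b g : nat) : INR (expn b g) = INR b ^ g.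
Proof.
elim: g => [|g IH]; first by rewrite expn0.
by rewrite expnS mult_INR IH /=.
Qed.

Lemma ln_le' (x y : R) : 0 < x -> x <= y -> ln x <= ln y.
Proof.
move=> Hx Hxy; case: (Rle_lt_or_eq_dec _ _ Hxy) => H.
  by left; apply: ln_increasing.
by rewrite H; right.
Qed.

Lemma real_bound (n v a b g : nat) :
  leq (muln (expn 2 n) v) (muln a (expn b g)) -> leq 1 v ->
  INR n <= log2 (INR a) + INR g * log2 (INR b).
Proof.
move=> H Hv.
have H1 : leq (expn 2 n) (muln a (expn b g)).
  apply: leq_trans H; by rewrite leq_pmulr.
have Hp : leq 1 (muln a (expn b g)) by apply: leq_trans H1; rewrite expn_gt0.
have Ha : leq 1 a by move: Hp; case: (a) => //; rewrite mul0n.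
have HR := le_INR _ _ (elimT leP H1).
rewrite INR_expn2 mult_INR INR_expn in HR.
have ln2 : 0 < ln 2 by have := ln_lt_2; lra.
have Hpos : 0 < 2 ^ n by apply: pow_lt; lra.
have Hl := ln_le' _ _ Hpos HR.
rewrite ln_pow in Hl; last lra.
have Hapos : 0 < INR a by apply: lt_0_INR; apply/leP.
have Heq : ln (INR a * INR b ^ g) = ln (INR a) + INR g * ln (INR b).
  case: g H Hp Hl HR {H1} => [|g] H Hp Hl HR.
    by rewrite /= Rmult_1_r; ring.
  have Hb : leq 1 b by move: Hp; case: (b) => //; rewrite exp0n // muln0.
  have Hbpos : 0 < INR b by apply: lt_0_INR; apply/leP.
  rewrite ln_mult // ?ln_pow //; apply: pow_lt => //.
rewrite Heq in Hl.
have -> : log2 (INR a) + INR g * log2 (INR b) = (ln (INR a) + INR g * ln (INR b)) / ln 2.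
  by rewrite /log2; field; lra.
apply: (Rmult_le_reg_r (ln 2)) => //.
rewrite /Rdiv Rmult_assoc Rinv_l; lra.
Qed.

Lemma cost_eq {S : Type} {A : eqType} {G MC LO : finType}
  (mc : MC -> S -> G) (lo : LO -> S -> A * bool)
  (envs : nat -> env S A G) (hstar h0 : hpol G MC LO) CI CL T :
  dagger_cost mc lo envs hstar h0 CI CL T
  = INR T * CI + INR (nfail mc lo envs hstar h0 T) * CL.
Proof.
elim: T => [|t IH]; first by rewrite /=; ring.
change (dagger_cost mc lo envs hstar h0 CI CL t.+1) with
  (dagger_cost mc lo envs hstar h0 CI CL t + CI + (if round_pass mc lo envs hstar h0 t then 0 else CL)).
change (nfail mc lo envs hstar h0 t.+1) with (addn (nfail mc lo envs hstar h0 t) (~~ round_pass mc lo envs hstar h0 t)).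
rewrite IH plus_INR S_INR.
case: (round_pass mc lo envs hstar h0 t) => /=; ring.
Qed.

Theorem theorem2 (S : Type) (A : eqType) (G MC LO : finType)
  (mc : MC -> S -> G) (lo : LO -> S -> A * bool)
  (Hmc : injective mc) (Hlo : injective lo)
  (envs : nat -> env S A G) (hstar h0 : hpol G MC LO) (CI CL : R) (T : nat) :
  (0 <= CI)%R -> (0 <= CL)%R ->
  (forall (t : nat) (mu : S -> G) (pi : G -> S -> A * bool),
      agrees mu (hmu mc hstar) pi (hpi lo hstar) (rollout (envs t) mu pi) ->
      env_inspect (envs t) (rollout (envs t) mu pi)) ->
  (dagger_cost mc lo envs hstar h0 CI CL T
     <= INR T * CI
        + (log2 (INR #|MC|) + INR #|G| * log2 (INR #|LO|)) * CL)%R.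
Proof.
move=> HCI HCL Hcons.
rewrite cost_eq.
have Hb := real_bound _ _ _ _ _ (nfail_bound mc lo envs hstar h0 T Hcons).
have Hv : leq 1 #|version_space mc lo envs hstar h0 T|.
  by apply/card_gt0P; exists hstar; apply: star_in.
have := Hb Hv => Hn.
apply: Rplus_le_compat_l; apply: Rmult_le_compat_r => //.
Qed.
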